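(* Let $\mathcal{H}$ be a separable Hilbert space and $\{f_n\}_{n=1}^\infty$ a Bessel sequence in $\mathcal{H}$. Then $\{f_n\}$ is a pseudo-Riesz basis for $\mathcal{H}$ if and only if it is simultaneously a pseudo-frame and a pseudo-Riesz sequence.
   Context: A Bessel sequence $\{f_n\}$ in $\mathcal{H}$ is a pseudo-Riesz basis if there are a finite set $\sigma\subseteq\mathbb{N}$ and finitely many vectors $g_1,\dots,g_m\in\mathcal{H}$ such that $\{f_n\}_{n\notin\sigma}\cup\{g_1,\dots,g_m\}$ is a Riesz basis for $\mathcal{H}$. A Bessel sequence is a pseudo-frame if it becomes a frame for $\mathcal{H}$ after adding finitely many appropriate vectors to it. A Bessel sequence is a pseudo-Riesz sequence if it becomes a Riesz sequence after removing finitely many appropriate vectors from it. *)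

(* Defs.v *)
From HB Require Import structures.
From mathcomp Require Import all_boot all_order all_algebra.
From mathcomp Require Import all_classical all_reals.
From mathcomp Require Import ereal esum.
From mathcomp.real_closed Require Import complex.

Set Implicit Arguments.
Unset Strict Implicit.
Unset Printing Implicit Defensive.

Import Order.TTheory GRing.Theory Num.Theory.
Local Open Scope ring_scope.
Local Open Scope classical_set_scope.

Section Hilbert.
Variables (R : realType) (V : lmodType R[i]) (ip : V -> V -> R[i]).

Definition inner_product : Prop :=
  [/\ (forall (a : R[i]) (x y z : V), ip (a *: x + y) z = a * ip x z + ip y z),
      (forall x y : V, ip y x = conjc (ip x y)),
      (forall x : V, 0 <= complex.Re (ip x x)) &
      (forall x : V, ip x x = 0 -> x = 0)].

Definition hnorm (x : V) : R := Num.sqrt (complex.Re (ip x x)).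

Definition csq (z : R[i]) : R := (Normc.normc z) ^+ 2.

Definition hcomplete : Prop :=
  forall u : nat -> V,
    (forall e : R, 0 < e -> exists N : nat, forall m n : nat,
         (N <= m)%N -> (N <= n)%N -> hnorm (u m - u n) < e) ->
    exists l : V, forall e : R, 0 < e -> exists N : nat, forall n : nat,
         (N <= n)%N -> hnorm (u n - l) < e.

Definition hseparable : Prop :=
  exists d : nat -> V, forall (x : V) (e : R), 0 < e ->
    exists n : nat, hnorm (x - d n) < e.

Section Families.
Variable I : choiceType.
Implicit Types (f : I -> V).

Definition lincomb f (s : seq I) (c : I -> R[i]) : V :=
  \sum_(i <- s) c i *: f i.

Definition coef_sum f (x : V) : \bar R :=
  \esum_(i in [set: I]) (csq (ip x (f i)))%:E.

Definition bessel f : Prop :=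
  exists B : R, 0 < B /\
    forall x : V, (coef_sum f x <= (B * hnorm x ^+ 2)%:E)%E.

Definition frame f : Prop :=
  exists A B : R, [/\ 0 < A, 0 < B &
    forall x : V, ((A * hnorm x ^+ 2)%:E <= coef_sum f x)%E /\
                  (coef_sum f x <= (B * hnorm x ^+ 2)%:E)%E].

Definition riesz_sequence f : Prop :=
  exists A B : R, [/\ 0 < A, 0 < B &
    forall (s : seq I) (c : I -> R[i]), uniq s ->
      A * (\sum_(i <- s) csq (c i)) <= hnorm (lincomb f s c) ^+ 2 /\
      hnorm (lincomb f s c) ^+ 2 <= B * (\sum_(i <- s) csq (c i))].

Definition complete_family f : Prop :=
  forall (x : V) (e : R), 0 < e ->
    exists (s : seq I) (c : I -> R[i]), hnorm (x - lincomb f s c) < e.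

Definition riesz_basis f : Prop := complete_family f /\ riesz_sequence f.

End Families.

Definition remove_add (f : nat -> V) (sigma : seq nat) (m : nat) (g : 'I_m -> V)
  : {n : nat | n \notin sigma} + 'I_m -> V :=
  fun i => match i with inl n => f (sval n) | inr k => g k end.

Definition add_vecs (f : nat -> V) (m : nat) (g : 'I_m -> V) : nat + 'I_m -> V :=
  fun i => match i with inl n => f n | inr k => g k end.

Definition remove_vecs (f : nat -> V) (sigma : seq nat) : {n : nat | n \notin sigma} -> V :=
  fun n => f (sval n).

Definition pseudo_riesz_basis (f : nat -> V) : Prop :=
  exists (sigma : seq nat) (m : nat) (g : 'I_m -> V),
    riesz_basis (@remove_add f sigma m g).

Definition pseudo_frame (f : nat -> V) : Prop :=
  exists (m : nat) (g : 'I_m -> V), frame (@add_vecs f m g).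

Definition pseudo_riesz_sequence (f : nat -> V) : Prop :=
  exists sigma : seq nat, riesz_sequence (@remove_vecs f sigma).

End Hilbert.

(* Main.v *)
Require Import Defs.
From mathcomp Require Import all_boot all_order all_algebra.
From mathcomp Require Import all_classical all_reals.
From mathcomp Require Import ereal esum.
From mathcomp.real_closed Require Import complex.
From mathcomp Require Import ring lra.
Import Order.TTheory GRing.Theory Num.Theory.
Local Open Scope ring_scope.
Local Open Scope complex_scope.
Local Open Scope classical_set_scope.

Section Basics.
Context {R : realType} {V : lmodType R[i]} {ip : V -> V -> R[i]}.
Hypothesis Hip : inner_product ip.

Definition Qn (x : V) : R := complex.Re (ip x x).

Lemma csqE (a b : R) : @csq R (Complex a b) = a ^+ 2 + b ^+ 2.
Proof. by rewrite /csq /= sqr_sqrtr // addr_ge0 // sqr_ge0. Qed.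

Lemma csq_ge0 (z : R[i]) : 0 <= csq z.
Proof. by case: z => a b; rewrite csqE addr_ge0 // sqr_ge0. Qed.

Lemma conjD (a b : R[i]) : conjc (a + b) = conjc a + conjc b.
Proof. by case: a => ? ?; case: b => ? ? /=; simpc. Qed.
Lemma conjM (a b : R[i]) : conjc (a * b) = conjc a * conjc b.
Proof. by case: a => ? ?; case: b => ? ? /=; simpc. Qed.
Lemma conjN (a : R[i]) : conjc (- a) = - conjc a.
Proof. by case: a => ? ? /=; simpc. Qed.

Lemma ipDl x y z : ip (x + y) z = ip x z + ip y z.
Proof. by case: Hip => H _ _ _; rewrite -[x in LHS]scale1r H mul1r. Qed.

Lemma ip0l z : ip 0 z = 0.
Proof.
have := ipDl 0 0 z; rewrite addr0 => /eqP.
by rewrite -subr_eq0 opprD addrA subrr add0r oppr_eq0 => /eqP.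
Qed.

Lemma ipZl a x z : ip (a *: x) z = a * ip x z.
Proof. by case: Hip => H _ _ _; rewrite -[_ *: x]addr0 H ip0l addr0. Qed.

Lemma ipNl x z : ip (- x) z = - ip x z.
Proof. by rewrite -scaleN1r ipZl mulN1r. Qed.

Lemma ipBl x y z : ip (x - y) z = ip x z - ip y z.
Proof. by rewrite ipDl ipNl. Qed.

Lemma ipC x y : ip y x = conjc (ip x y).
Proof. by case: Hip. Qed.

Lemma ipDr x y z : ip x (y + z) = ip x y + ip x z.
Proof. by rewrite (ipC (y + z) x) ipDl conjD -(ipC y x) -(ipC z x). Qed.

Lemma ipZr a x y : ip x (a *: y) = conjc a * ip x y.
Proof. by rewrite (ipC (a *: y) x) ipZl conjM -(ipC y x). Qed.

Lemma ip0r x : ip x 0 = 0.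
Proof. by rewrite (ipC 0 x) ip0l conjc0. Qed.

Lemma ipNr x z : ip x (- z) = - ip x z.
Proof. by rewrite (ipC (- z) x) ipNl conjN -(ipC z x). Qed.

Lemma ipBr x y z : ip x (y - z) = ip x y - ip x z.
Proof. by rewrite ipDr ipNr. Qed.

Lemma ipsuml (I : Type) (s : seq I) (F : I -> V) z :
  ip (\sum_(i <- s) F i) z = \sum_(i <- s) ip (F i) z.
Proof.
elim: s => [|a s IH]; first by rewrite !big_nil ip0l.
by rewrite !big_cons ipDl IH.
Qed.

Lemma ipsumr (I : Type) (s : seq I) (F : I -> V) z :
  ip z (\sum_(i <- s) F i) = \sum_(i <- s) ip z (F i).
Proof.
elim: s => [|a s IH]; first by rewrite !big_nil ip0r.
by rewrite !big_cons ipDr IH.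
Qed.

Lemma ipxx x : ip x x = (Qn x)%:C.
Proof.
have := ipC x x; rewrite /Qn; case: (ip x x) => a b /= [] Hb.
by congr Complex; lra.
Qed.

Lemma Qn_ge0 x : 0 <= Qn x.
Proof. by case: Hip => _ _ H _; apply: H. Qed.

Lemma Qn_eq0 x : Qn x = 0 -> x = 0.
Proof. by case: Hip => _ _ _ H E; apply: H; rewrite ipxx E. Qed.

Lemma hnorm2 x : hnorm ip x ^+ 2 = Qn x.
Proof. by rewrite /hnorm sqr_sqrtr // Qn_ge0. Qed.

Lemma hnorm_ge0 x : 0 <= hnorm ip x.
Proof. exact: sqrtr_ge0. Qed.

Lemma QD x y a : Qn (x + a *: y) =
  Qn x + 2 * complex.Re (conjc a * ip x y) + csq a * Qn y.
Proof.
rewrite {1}/Qn ipDl !ipDr !ipZl !ipZr (ipC x y) (ipxx y) (ipxx x).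
case: a => a1 a2; case: (ip x y) => p1 p2; rewrite csqE.
simpc => /=; ring.
Qed.


Lemma Qn0 : Qn 0 = 0.
Proof. by rewrite /Qn ip0l. Qed.

Lemma QDp x y : Qn (x + y) = Qn x + 2 * complex.Re (ip x y) + Qn y.
Proof.
have := QD x y 1; rewrite scale1r => ->.
by rewrite conjc1 mul1r [csq 1]csqE; congr (_ + _); lra.
Qed.

Lemma QZ a y : Qn (a *: y) = csq a * Qn y.
Proof. by rewrite -[a *: y]add0r QD Qn0 ip0l mulr0 /= mulr0 !add0r. Qed.

Lemma QN y : Qn (- y) = Qn y.
Proof. by rewrite /Qn ipNl ipNr opprK. Qed.

Lemma CS x y : csq (ip x y) <= Qn x * Qn y.
Proof.
have [/Qn_eq0 ->|qy] := eqVneq (Qn y) 0.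
  by rewrite ip0r Qn0 mulr0 [csq 0]csqE; lra.
have qpos : 0 < Qn y by rewrite lt0r qy Qn_ge0.
move: (Qn_ge0 (x + (Complex (- complex.Re (ip x y) / Qn y) (- complex.Im (ip x y) / Qn y)) *: y)).
rewrite QD; case: (ip x y) => p1 p2 /=; rewrite !csqE; simpc => /= H.
set q := Qn y in qpos qy H *.
have E : 2 * (- (p1 / q * p1) - p2 / q * p2) +
   ((- (p1 / q)) ^+ 2 + (- (p2 / q)) ^+ 2) * q = - ((p1 ^+ 2 + p2 ^+ 2) / q).
  by field.
have : (p1 ^+ 2 + p2 ^+ 2) / q <= Qn x by lra.
by rewrite ler_pdivrMr.
Qed.


Lemma hnormE x : hnorm ip x = Num.sqrt (Qn x).
Proof. by []. Qed.

Lemma Re_ip_le x y : complex.Re (ip x y) <= hnorm ip x * hnorm ip y.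
Proof.
have := CS x y; rewrite -!hnorm2; have := hnorm_ge0 x; have := hnorm_ge0 y.
case: (ip x y) => p1 p2; rewrite csqE /=.
set a := hnorm ip x; set b := hnorm ip y => hb ha H.
have hab : 0 <= a * b by apply: mulr_ge0.
have H2 : p1 ^+ 2 <= (a * b) ^+ 2.
  by rewrite exprMn; have := sqr_ge0 p2; lra.
case: (lerP p1 (a * b)) => // Hc.
have h1 : 0 < p1 - a * b by rewrite subr_gt0.
have h2 : 0 < p1 + a * b by lra.
have := mulr_gt0 h1 h2; nra.
Qed.

Lemma hnormD x y : hnorm ip (x + y) <= hnorm ip x + hnorm ip y.
Proof.
have := QDp x y; rewrite -!hnorm2; have := Re_ip_le x y.
have := hnorm_ge0 x; have := hnorm_ge0 y; have := hnorm_ge0 (x + y).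
set a := hnorm ip x; set b := hnorm ip y; set c := hnorm ip (x + y).
move=> hc hb ha H E; nra.
Qed.

Lemma hnormN x : hnorm ip (- x) = hnorm ip x.
Proof. by rewrite !hnormE QN. Qed.

Lemma hnormB x y : hnorm ip (x - y) = hnorm ip (y - x).
Proof. by rewrite -hnormN opprB. Qed.

Lemma hnorm_lt x e : 0 < e -> (hnorm ip x < e <-> Qn x < e ^+ 2).
Proof.
move=> e0; rewrite -hnorm2; have := hnorm_ge0 x; set a := hnorm ip x => ha.
split => H; nra.
Qed.

Lemma hnorm_eq0 x : hnorm ip x = 0 -> x = 0.
Proof. by move=> H; apply: Qn_eq0; rewrite -hnorm2 H expr0n. Qed.

End Basics.
Arguments Qn {R V} ip x.

Section Esum.
Variables (R : realType) (I : choiceType).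

Lemma esum_ge_seq (F : I -> R) (s : seq I) : uniq s ->
  ((\sum_(i <- s) F i)%:E <= \esum_(i in [set: I]) (F i)%:E)%E.
Proof.
move=> us; apply: esum_ge; exists [set` s]; first by split => //.
by rewrite -fsbig_seq // sumEFin.
Qed.

Lemma esum_le_seq (F : I -> R) (M : R) :
  (forall s : seq I, uniq s -> \sum_(i <- s) F i <= M) ->
  (\esum_(i in [set: I]) (F i)%:E <= M%:E)%E.
Proof.
move=> H; apply: ge_ereal_sup => _ [X [finX _] <-].
rewrite fsbig_finite // sumEFin lee_fin; apply: H.
exact: finmap.fset_uniq.
Qed.

End Esum.
Arguments esum_ge_seq {R I} F s _.
Arguments esum_le_seq {R I} F M _.

Lemma eps_small {R : realType} (eta : R) : 0 < eta ->
  exists N : nat, forall n : nat, (N <= n)%N -> (n.+1%:R : R)^-1 < eta.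
Proof.
move=> e0; exists (Num.truncn (eta^-1)) => n Hn.
have H1 : eta^-1 < (Num.truncn (eta^-1)).+1%:R by apply: truncnS_gt.
have H2 : ((Num.truncn (eta^-1)).+1%:R : R) <= n.+1%:R by rewrite ler_nat ltnS.
have H3 : eta^-1 < n.+1%:R := lt_le_trans H1 H2.
rewrite -[eta]invrK ltf_pV2 // ?posrE ?invr_gt0 //.
Qed.

Lemma sub_add_cancel (V : zmodType) (u a b : V) : (u - a) - (u - b) = b - a.
Proof. by rewrite opprB addrC addrA subrK. Qed.

Section Span.
Variables (R : realType) (V : lmodType R[i]) (ip : V -> V -> R[i]).
Hypothesis Hip : inner_product ip.
Variables (I : Type) (h : I -> V).

Definition spanL (l : seq (R[i] * I)) : V := \sum_(p <- l) p.1 *: h p.2.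

Lemma spanL_cat l1 l2 : spanL (l1 ++ l2) = spanL l1 + spanL l2.
Proof. by rewrite /spanL big_cat. Qed.

Lemma spanL1 a i : spanL [:: (a, i)] = a *: h i.
Proof. by rewrite /spanL big_seq1. Qed.

Lemma spanL_nil : spanL [::] = 0.
Proof. by rewrite /spanL big_nil. Qed.

Lemma spanL_scale a l : a *: spanL l = spanL [seq (a * p.1, p.2) | p <- l].
Proof.
rewrite /spanL big_map scaler_sumr; apply: eq_bigr => p _.
by rewrite scalerA.
Qed.

Lemma spanL_opp l : - spanL l = spanL [seq (- p.1, p.2) | p <- l].
Proof.
rewrite /spanL big_map -sumrN; apply: eq_bigr => p _.
by rewrite scaleNr.
Qed.

Definition incl (x : V) := forall e : R, 0 < e -> exists l, hnorm ip (x - spanL l) < e.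

Lemma parallelogram (a b : V) :
  Qn ip (a + b) + Qn ip (a - b) = 2 * Qn ip a + 2 * Qn ip b.
Proof.
rewrite !QDp // QN // ipNr //; case: (ip a b) => p1 p2 /=; lra.
Qed.


Lemma projection (Hc : hcomplete ip) (u : V) :
  exists w, incl w /\ forall i, ip (u - w) (h i) = 0.
Proof.
pose D := [set r : R | exists l, r = hnorm ip (u - spanL l)].
have D0 : D (hnorm ip (u - spanL [::])) by exists [::].
have lbD : lbound D 0 by move=> r [l ->]; apply: hnorm_ge0.
have hiD : has_inf D by split; [exists (hnorm ip (u - spanL [::])) | exists 0].
set dd := inf D.
have Hdd : forall l, dd <= hnorm ip (u - spanL l).
  by move=> l; apply: (ge_inf (proj2 hiD)); exists l.
have dd0 : 0 <= dd by apply: lb_le_inf => //; exists (hnorm ip (u - spanL [::])).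
pose eps (n : nat) := (n.+1%:R : R)^-1.
have eps_gt0 : forall n, 0 < eps n by move=> n; rewrite invr_gt0 ltr0n.
have eps_le1 : forall n, eps n <= 1.
  by move=> n; rewrite invr_le1 ?ler1n ?ltr0n // unitfE pnatr_eq0.
have Hch : forall n : nat, exists l, hnorm ip (u - spanL l) < dd + eps n.
  move=> n; have [r [l ->] Hr] := inf_adherent (eps_gt0 n) hiD; by exists l.
have [L HL] := choice Hch.
pose y n := spanL (L n).
have Kpos : 0 < 4 * dd + 2 by lra.
have cb : forall n m, Qn ip (y n - y m) <= (4 * dd + 2) * (eps n + eps m).
  move=> n m.
  have e1 : y n - y m = (u - y m) - (u - y n) by rewrite sub_add_cancel.
  pose mid := [seq (((2 : R)^-1)%:C * p.1, p.2) | p <- L m ++ L n].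
  have e2 : (u - y m) + (u - y n) = ((2 : R)%:C) *: (u - spanL mid).
    rewrite -spanL_scale spanL_cat scalerBr scalerA -rmorphM mulfV ?pnatr_eq0 //.
    rewrite scale1r (rmorph_nat (real_complex R) 2) scaler_nat mulr2n.
    by rewrite opprD addrACA.
  have P := parallelogram (u - y m) (u - y n).
  rewrite e2 QZ // -e1 in P.
  have Hm := HL m; have Hn := HL n.
  have Hm' := Hdd (L m); have Hn' := Hdd (L n).
  have Hmid := Hdd mid.
  rewrite /y in P *.
  rewrite -(hnorm2 Hip (u - spanL (L m))) -(hnorm2 Hip (u - spanL (L n))) in P.
  rewrite -(hnorm2 Hip (u - spanL mid)) [csq _]csqE in P.
  have em := eps_gt0 m; have en := eps_gt0 n; have em1 := eps_le1 m; have en1 := eps_le1 n.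
  move: P Hm Hn Hm' Hn' Hmid.
  set a := hnorm ip (u - spanL (L m)); set b := hnorm ip (u - spanL (L n)).
  set c := hnorm ip (u - spanL mid); set Q := Qn ip _.
  move=> P Hm Hn Hm' Hn' Hmid.
  nra.
have Hcy : forall e : R, 0 < e -> exists N : nat, forall m n : nat,
    (N <= m)%N -> (N <= n)%N -> hnorm ip (y m - y n) < e.
  move=> e e0.
  have e2K : 0 < e ^+ 2 / (2 * (4 * dd + 2)) by apply: divr_gt0; [apply: exprn_gt0|lra].
  have [N HN] := eps_small _ e2K.
  exists N => m n Hm Hn; apply/(hnorm_lt Hip) => //.
  have := cb m n; have := HN m Hm; have := HN n Hn.
  have := eps_gt0 m; have := eps_gt0 n.
  set K := 4 * dd + 2; set q := e ^+ 2 / (2 * K) => p1 p2 h1 h2 h3.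
  have Kp : 0 < K := Kpos.
  have K2 : 2 * K != 0 by rewrite lt0r_neq0 //; lra.
  have Eq : e ^+ 2 = 2 * K * q by rewrite /q mulrC divfK.
  have : K * (eps m + eps n) < K * (2 * q).
    rewrite ltr_pM2l //.
    have h1' : eps n < q := h1; have h2' : eps m < q := h2.
    move: (eps m) (eps n) h1' h2' => a b ? ?; lra.
  rewrite Eq; lra.
have [w Hw] := Hc y Hcy.
exists w; split.
  move=> e e0; have [N HN] := Hw e e0; exists (L N).
  by rewrite (hnormB Hip); apply: HN.
move=> i.
have key : forall a, hnorm ip (u - w) <= hnorm ip (u - w + a *: h i).
  move=> a; apply/ler_addgt0Pr => et et0.
  have et3 : 0 < et / 3 by lra.
  have [N1 HN1] := Hw _ et3; have [N2 HN2] := eps_small _ et3.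
  pose n := maxn N1 N2.
  have h1 := HN1 n (leq_maxl _ _).
  have h2 := HN2 n (leq_maxr _ _).
  have t1 : hnorm ip (u - w) <= hnorm ip (u - y n) + hnorm ip (y n - w).
    have E : u - w = (u - y n) + (y n - w) by rewrite addrA subrK.
    by rewrite {1}E; apply: hnormD.
  have t2 : dd <= hnorm ip (u - w + a *: h i) + hnorm ip (w - y n).
    apply: (le_trans (Hdd (L n ++ [:: (- a, i)]))).
    have E : u - spanL (L n ++ [:: (- a, i)]) = (u - w + a *: h i) + (w - y n).
      rewrite spanL_cat spanL1 scaleNr -/(y n).
      by rewrite opprD opprK [RHS]addrACA subrK (addrC (a *: h i)).
    by rewrite E; apply: hnormD.
  rewrite (hnormB Hip) in t2.
  have h2' : eps n < et / 3 := h2.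
  have HLn : hnorm ip (u - y n) < dd + eps n := HL n.
  move: (eps n) h2' HLn => en ? ?; lra.
have Qh := Qn_ge0 Hip (h i).
pose k := (Qn ip (h i) + 1)^-1.
have k0 : 0 < k by rewrite invr_gt0; lra.
have kQ : k * Qn ip (h i) <= 1.
  by rewrite /k mulrC ler_pdivrMr; lra.
have := key (Complex (- k * complex.Re (ip (u - w) (h i))) (- k * complex.Im (ip (u - w) (h i)))).
set a := Complex _ _ => Ha.
have Hq : Qn ip (u - w) <= Qn ip (u - w + a *: h i).
  rewrite -!(hnorm2 Hip) !expr2; have := hnorm_ge0 (u - w) => H0.
  by apply: ler_pM.
move: Hq; rewrite (QD Hip) /a.
case: (ip (u - w) (h i)) => p1 p2 /=; rewrite csqE; simpc => /= Hq.
move: Hq kQ Qh; set q := Qn ip (h i); set q0 := Qn ip (u - w) => Hq kQ Qh.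
have S0 : 0 <= p1 ^+ 2 + p2 ^+ 2 by rewrite addr_ge0 // sqr_ge0.
set S := p1 ^+ 2 + p2 ^+ 2 in S0.
have E : 2 * (- (k * p1 * p1) - k * p2 * p2) + ((- (k * p1)) ^+ 2 + (- (k * p2)) ^+ 2) * q
   = (k * S) * (k * q - 2) by rewrite /S; ring.
have H1 : 0 <= (k * S) * (k * q - 2) by rewrite -E; lra.
have kS : 0 <= k * S by apply: mulr_ge0 => //; apply: ltW.
have H2 : (k * S) * (k * q - 2) <= (k * S) * (-1) by apply: ler_wpM2l => //; lra.
have kS0 : k * S <= 0 by lra.
have SS : S = 0.
  apply/eqP; rewrite eq_le S0 andbT.
  by rewrite -(pmulr_rle0 _ k0).
have s1 := sqr_ge0 p1; have s2 := sqr_ge0 p2.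
move: SS; rewrite /S => SS.
have P1 : p1 = 0 by apply/eqP; rewrite -sqrf_eq0 eq_le sqr_ge0 andbT; lra.
have P2 : p2 = 0 by apply/eqP; rewrite -sqrf_eq0 eq_le sqr_ge0 andbT; lra.
by rewrite P1 P2.
Qed.

End Span.
Arguments spanL {R V I} h l.
Arguments incl {R V} ip {I} h x.
Arguments projection {R V ip} Hip {I} h Hc u.


Section SumSplit.
Variables (J K : Type).
Definition lefts (s : seq (J + K)) : seq J :=
  pmap (fun x => if x is inl j then Some j else None) s.
Definition rights (s : seq (J + K)) : seq K :=
  pmap (fun x => if x is inr k then Some k else None) s.

Lemma big_split_sum (M : nmodType) (F : J + K -> M) s :
  \sum_(x <- s) F x = \sum_(j <- lefts s) F (inl j) + \sum_(k <- rights s) F (inr k).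
Proof.
elim: s => [|[j|k] s IH]; first by rewrite !big_nil addr0.
  by rewrite /lefts /rights /= !big_cons IH addrA.
by rewrite /lefts /rights /= !big_cons IH addrCA.
Qed.
End SumSplit.
Arguments lefts {J K} s.
Arguments rights {J K} s.

Section SumSplitEq.
Variables (J K : eqType).
Lemma mem_lefts (s : seq (J + K)) j : (j \in lefts s) = (inl j \in s).
Proof.
elim: s => [|[j'|k] s IH] //=; rewrite /lefts /= in IH *; by rewrite !in_cons IH.
Qed.
Lemma mem_rights (s : seq (J + K)) k : (k \in rights s) = (inr k \in s).
Proof.
elim: s => [|[j|k'] s IH] //=; rewrite /rights /= in IH *; by rewrite !in_cons IH.
Qed.
Lemma uniq_lefts (s : seq (J + K)) : uniq s -> uniq (lefts s).
Proof.
elim: s => [|[j|k] s IH] //= /andP[Hn Hu]; rewrite /lefts /= in IH *; last exact: IH.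
by rewrite IH // andbT; move: (mem_lefts s j); rewrite /lefts => ->.
Qed.
Lemma uniq_rights (s : seq (J + K)) : uniq s -> uniq (rights s).
Proof.
elim: s => [|[j|k] s IH] //= /andP[Hn Hu]; rewrite /rights /= in IH *; first exact: IH.
by rewrite IH // andbT; move: (mem_rights s k); rewrite /rights => ->.
Qed.
End SumSplitEq.

Section Incl.
Context {R : realType} {V : lmodType R[i]} {ip : V -> V -> R[i]}.
Hypothesis Hip : inner_product ip.

Lemma normc_ge0 (a : R[i]) : 0 <= Normc.normc a.
Proof. by case: a => ? ?; apply: sqrtr_ge0. Qed.

Lemma hnormZ a x : hnorm ip (a *: x) = Normc.normc a * hnorm ip x.
Proof.
rewrite !hnormE (QZ Hip) sqrtrM ?csq_ge0 //; congr (_ * _).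
by rewrite /csq sqrtr_sqr ger0_norm // normc_ge0.
Qed.

Variables (I : Type) (h : I -> V).
Local Notation spanL := (spanL h).
Local Notation incl := (incl ip h).

Lemma incl_spanL l : incl (spanL l).
Proof. by move=> e e0; exists l; rewrite subrr hnormE (Qn0 Hip) sqrtr0. Qed.

Lemma incl_add x y : incl x -> incl y -> incl (x + y).
Proof.
move=> Hx Hy e e0; have e2 : 0 < e / 2 by lra.
have [l1 H1] := Hx _ e2; have [l2 H2] := Hy _ e2.
exists (l1 ++ l2); rewrite spanL_cat.
have -> : x + y - (spanL l1 + spanL l2) = (x - spanL l1) + (y - spanL l2).
  by rewrite opprD addrACA.
by apply: le_lt_trans (hnormD Hip _ _) _; lra.
Qed.

Lemma incl_scale a x : incl x -> incl (a *: x).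
Proof.
move=> Hx e e0; have na := normc_ge0 a.
have et : 0 < e / (Normc.normc a + 1) by apply: divr_gt0; lra.
have [l Hl] := Hx _ et.
exists [seq (a * p.1, p.2) | p <- l]; rewrite -spanL_scale -scalerBr hnormZ.
have hl := hnorm_ge0 (x - spanL l).
have E : e = (Normc.normc a + 1) * (e / (Normc.normc a + 1)).
  by rewrite mulrC divfK // lt0r_neq0 //; lra.
have : (Normc.normc a + 1) * hnorm ip (x - spanL l) <
       (Normc.normc a + 1) * (e / (Normc.normc a + 1)) by rewrite ltr_pM2l //; lra.
rewrite -E; nra.
Qed.

Lemma incl_close x : (forall e, 0 < e -> exists z, incl z /\ hnorm ip (x - z) < e) -> incl x.
Proof.
move=> H e e0; have e2 : 0 < e / 2 by lra.
have [z [Hz Hxz]] := H _ e2; have [l Hl] := Hz _ e2.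
exists l; have -> : x - spanL l = (x - z) + (z - spanL l) by rewrite addrA subrK.
by apply: le_lt_trans (hnormD Hip _ _) _; lra.
Qed.

End Incl.

Section InclGen.
Context {R : realType} {V : lmodType R[i]} {ip : V -> V -> R[i]}.
Hypothesis Hip : inner_product ip.
Variables (I1 I2 : Type) (h1 : I1 -> V) (h2 : I2 -> V).

Lemma incl_spanL_gen : (forall i, incl ip h2 (h1 i)) -> forall l, incl ip h2 (spanL h1 l).
Proof.
move=> H; elim => [|[a i] l IH].
  by rewrite spanL_nil; have := incl_spanL Hip _ h2 [::]; rewrite spanL_nil.
rewrite /spanL big_cons -/(spanL h1 l) /=.
by apply: incl_add => //; apply: incl_scale.
Qed.

Lemma incl_incl x : (forall i, incl ip h2 (h1 i)) -> incl ip h1 x -> incl ip h2 x.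
Proof.
move=> H Hx; apply: (incl_close Hip) => e e0.
have [l Hl] := Hx e e0; exists (spanL h1 l); split => //.
exact: incl_spanL_gen.
Qed.

End InclGen.

Section Conv.
Context {R : realType} {V : lmodType R[i]}.
Variables (I : choiceType) (h : I -> V).

Lemma spanL_lincomb l : exists s c, uniq s /\ spanL h l = lincomb h s c.
Proof.
elim: l => [|[a i] l [s [c [us E]]]].
  by exists [::], (fun _ => 0); rewrite spanL_nil /lincomb big_nil.
rewrite /spanL big_cons -/(spanL h l) E /=.
case Hi: (i \in s).
  exists s, (fun j => if j == i then a + c j else c j); split => //.
  rewrite /lincomb.
  elim: s us Hi {E} => [|j s IHs] //= /andP[js us].
  rewrite in_cons => /orP[/eqP ji|iS].
    subst j; rewrite !big_cons eqxx scalerDl -addrA; congr (_ + (_ + _)).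
    apply: eq_big_seq => j jS /=; case: eqP => // ji; subst j.
    by rewrite jS in js.
  rewrite !big_cons addrCA IHs //; congr (_ + _).
  by case: eqP => // ji; subst j; rewrite iS in js.
exists (i :: s), (fun j => if j == i then a else c j); split.
  by rewrite /= Hi us.
rewrite /lincomb big_cons eqxx; congr (_ + _).
apply: eq_big_seq => j jS /=; case: eqP => // ji; subst j.
by rewrite jS in Hi.
Qed.

End Conv.

Lemma csqR {R : realType} (x : R) : csq (x%:C) = x ^+ 2.
Proof. by rewrite [csq _]csqE expr0n addr0. Qed.

Section GS.
Context {R : realType} {V : lmodType R[i]} {ip : V -> V -> R[i]}.
Hypothesis Hip : inner_product ip.

Lemma GS (J : Type) (z : J -> V) (ps : seq V) :
  (forall p, p \in ps -> forall j, ip p (z j) = 0) ->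
  exists (r : nat) (e : nat -> V),
    [/\ (forall i j, (i < r)%N -> (j < r)%N -> ip (e i) (e j) = if i == j then 1 else 0),
        (forall i, (i < r)%N -> forall j, ip (e i) (z j) = 0) &
        (forall p, p \in ps -> exists c : nat -> R[i], p = \sum_(k < r) c k *: e k)].
Proof.
elim: ps => [|p ps IH] Hps.
  exists 0%N, (fun _ => 0); split => //.
have [r [e [Ho Hz Hs]]] : exists (r : nat) (e : nat -> V),
    [/\ (forall i j, (i < r)%N -> (j < r)%N -> ip (e i) (e j) = if i == j then 1 else 0),
        (forall i, (i < r)%N -> forall j, ip (e i) (z j) = 0) &
        (forall p, p \in ps -> exists c : nat -> R[i], p = \sum_(k < r) c k *: e k)].
  by apply: IH => q hq; apply: Hps; rewrite in_cons hq orbT.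
pose v := p - \sum_(k < r) ip p (e k) *: e k.
have Hvz : forall j, ip v (z j) = 0.
  move=> j; rewrite /v (ipBl Hip) (ipsuml Hip) big1 ?subr0.
    by apply: Hps; rewrite in_cons eqxx.
  by move=> k _; rewrite (ipZl Hip) Hz ?mulr0.
have Hve : forall i, (i < r)%N -> ip v (e i) = 0.
  move=> i Hi; rewrite /v (ipBl Hip) (ipsuml Hip).
  rewrite (eq_bigr (fun k : 'I_r => if (k : nat) == i then ip p (e k) else 0)).
    by rewrite -big_mkcond /= (big_ord1_eq _ (fun k => ip p (e k))) Hi subrr.
  move=> k _; rewrite (ipZl Hip) Ho //.
  by case: eqP => [->|]; rewrite ?mulr1 ?mulr0.
have [Hv0|Hv0] := eqVneq v 0.
  exists r, e; split => // q; rewrite in_cons => /orP[/eqP ->|/Hs //].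
  by exists (fun k => ip p (e k)); apply: subr0_eq.
pose nv := hnorm ip v.
have nv0 : 0 < nv.
  rewrite lt0r hnorm_ge0 andbT; apply/eqP => H.
  by move: Hv0; rewrite (hnorm_eq0 Hip _ H) eqxx.
pose en := (nv^-1)%:C *: v.
have Hen : ip en en = 1.
  rewrite (ipxx Hip) /en (QZ Hip) csqR -(hnorm2 Hip) -/nv.
  by rewrite exprVn mulVf // expf_neq0 // lt0r_neq0.
exists r.+1, (fun k => if k == r then en else e k); split.
- move=> i j Hi Hj.
  have [ir|ir] := eqVneq i r; have [jr|jr] := eqVneq j r; rewrite ?ir ?jr ?eqxx.
  + exact: Hen.
  + have Hj' : (j < r)%N by rewrite ltn_neqAle jr -ltnS.
    by rewrite /en (ipZl Hip) Hve // mulr0; case: eqP => // E; rewrite E eqxx in jr.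
  + have Hi' : (i < r)%N by rewrite ltn_neqAle ir -ltnS.
    rewrite /en (ipZr Hip) (ipC Hip) Hve // conjc0 mulr0.
    by case: eqP => // E; rewrite E eqxx in ir.
  + have Hi' : (i < r)%N by rewrite ltn_neqAle ir -ltnS.
    have Hj' : (j < r)%N by rewrite ltn_neqAle jr -ltnS.
    exact: Ho.
- move=> i Hi j; case: eqP => [_|ir].
    by rewrite /en (ipZl Hip) Hvz mulr0.
  by apply: Hz; rewrite ltn_neqAle -ltnS Hi andbT; apply/eqP.
- move=> q; rewrite in_cons => /orP[/eqP ->|/Hs [c ->]].
    exists (fun k => if (k < r)%N then ip p (e k) else nv%:C).
    rewrite big_ord_recr /= ltnn eqxx /en scalerA -rmorphM mulfV ?lt0r_neq0 //.
    rewrite scale1r.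
    rewrite (eq_bigr (fun k : 'I_r => ip p (e k) *: e k)).
      by rewrite /v addrC subrK.
    by move=> k _; rewrite ltn_ord ltn_eqF.
  exists (fun k => if (k < r)%N then c k else 0).
  rewrite big_ord_recr /= ltnn scale0r addr0.
  by apply: eq_bigr => k _; rewrite ltn_ord ltn_eqF.
Qed.

End GS.

Lemma Re_sum {R : realType} (I : Type) (s : seq I) (F : I -> R[i]) :
  complex.Re (\sum_(i <- s) F i) = \sum_(i <- s) complex.Re (F i).
Proof.
elim: s => [|a s IH]; first by rewrite !big_nil.
by rewrite !big_cons -IH; case: (F a) => ? ?; case: (\sum_(i <- s) F i).
Qed.

Lemma Re_conj_self {R : realType} (d : R[i]) : complex.Re (conjc d * d) = csq d.
Proof. by case: d => d1 d2; rewrite csqE /=; ring. Qed.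

Lemma csqD2 {R : realType} (p q : R[i]) : csq (p + q) <= 2 * csq p + 2 * csq q.
Proof.
case: p => p1 p2; case: q => q1 q2; simpc; rewrite !csqE.
have := sqr_ge0 (p1 - q1); have := sqr_ge0 (p2 - q2); nra.
Qed.

Section Riesz.
Context {R : realType} {V : lmodType R[i]} {ip : V -> V -> R[i]}.
Hypothesis Hip : inner_product ip.

Lemma ip_lincomb_r (I : choiceType) (F : I -> V) s c x :
  ip x (lincomb F s c) = \sum_(i <- s) conjc (c i) * ip x (F i).
Proof. by rewrite /lincomb (ipsumr Hip); apply: eq_bigr => i _; rewrite (ipZr Hip). Qed.

Lemma riesz_bessel_seq (I : choiceType) (F : I -> V) (b : R) : 0 < b ->
  (forall s c, uniq s -> Qn ip (lincomb F s c) <= b * \sum_(i <- s) csq (c i)) ->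
  forall x s, uniq s -> \sum_(i <- s) csq (ip x (F i)) <= b * Qn ip x.
Proof.
move=> b0 Hb x s us.
pose d i := ip x (F i).
pose z := lincomb F s d.
have Hz : complex.Re (ip x z) = \sum_(i <- s) csq (d i).
  rewrite ip_lincomb_r Re_sum; apply: eq_bigr => i _; exact: Re_conj_self.
have Qz := Hb s d us.
set S := \sum_(i <- s) csq (d i) in Hz Qz *.
have := Qn_ge0 Hip (x + (- b^-1)%:C *: z).
rewrite (QD Hip) csqR conjc_real.
move: Hz; case: (ip x z) => w1 w2 /= ->.
have S0 : 0 <= S by rewrite /S sumr_ge0 // => i _; apply: csq_ge0.
have Qx := Qn_ge0 Hip x.
move=> H.
have E : 2 * (- b^-1 * S - 0 * w2) + (- b^-1) ^+ 2 * Qn ip z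
   <= - b^-1 * S.
  have : (- b^-1) ^+ 2 * Qn ip z <= (- b^-1) ^+ 2 * (b * S).
    by apply: ler_wpM2l => //; apply: sqr_ge0.
  have -> : (- b^-1) ^+ 2 * (b * S) = b^-1 * S.
    by rewrite sqrrN expr2 -mulrA [b^-1 * (b * S)]mulrA mulVf ?mul1r // lt0r_neq0.
  lra.
have : b^-1 * S <= Qn ip x by lra.
by rewrite mulrC ler_pdivrMr // mulrC.
Qed.

Lemma riesz_lower_seq (I : choiceType) (F : I -> V) (a : R) : 0 < a ->
  forall s c, uniq s ->
  a * \sum_(i <- s) csq (c i) <= Qn ip (lincomb F s c) ->
  a * Qn ip (lincomb F s c) <= \sum_(i <- s) csq (ip (lincomb F s c) (F i)).
Proof.
move=> a0 s c us Ha.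
set y := lincomb F s c in Ha *.
have Ey : Qn ip y = \sum_(i <- s) complex.Re (conjc (c i) * ip y (F i)).
  by rewrite /Qn {2}/y ip_lincomb_r Re_sum.
have Hterm : forall i, 2 * a * complex.Re (conjc (c i) * ip y (F i)) <=
    a ^+ 2 * csq (c i) + csq (ip y (F i)).
  move=> i; case: (c i) => c1 c2; case: (ip y (F i)) => d1 d2.
  simpc; rewrite !csqE /=.
  have := sqr_ge0 (a * c1 - d1); have := sqr_ge0 (a * c2 - d2); nra.
have : 2 * a * Qn ip y <= a ^+ 2 * \sum_(i <- s) csq (c i) +
         \sum_(i <- s) csq (ip y (F i)).
  rewrite Ey mulr_sumr mulr_sumr -big_split /=.
  by apply: ler_sum => i _; apply: Hterm.
have : a ^+ 2 * \sum_(i <- s) csq (c i) <= a * Qn ip y.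
  by rewrite expr2 -mulrA; apply: ler_wpM2l => //; apply: ltW.
lra.
Qed.

Lemma orthonormal_sum (r : nat) (e : nat -> V) :
  (forall i j, (i < r)%N -> (j < r)%N -> ip (e i) (e j) = if i == j then 1 else 0) ->
  forall (s : seq 'I_r) (d : 'I_r -> R[i]), uniq s ->
  Qn ip (\sum_(k <- s) d k *: e k) = \sum_(k <- s) csq (d k).
Proof.
move=> Ho; elim => [|k s IH] d /=.
  by rewrite !big_nil (Qn0 Hip).
move=> /andP[ks us]; rewrite !big_cons (QDp Hip) (QZ Hip) IH //.
have -> : ip (d k *: e k) (\sum_(k0 <- s) d k0 *: e k0) = 0.
  rewrite (ipZl Hip) (ipsumr Hip) big1_seq ?mulr0 // => k' /andP[_ k's].
  rewrite (ipZr Hip) Ho //; case: eqP => [E|]; last by rewrite mulr0.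
  by move: ks; rewrite (val_inj E) k's.
have -> : Qn ip (e k) = 1 by rewrite /Qn Ho // eqxx.
by rewrite mulr1 /= mulr0 addr0.
Qed.

End Riesz.

Section Comb.
Context {R : realType} {V : lmodType R[i]} {ip : V -> V -> R[i]}.
Hypothesis Hip : inner_product ip.

Lemma riesz_comb (J : choiceType) (hW : J -> V) (r : nat) (e : nat -> V) :
  (forall i j, (i < r)%N -> (j < r)%N -> ip (e i) (e j) = if i == j then 1 else 0) ->
  (forall i, (i < r)%N -> forall j, ip (e i) (hW j) = 0) ->
  riesz_sequence ip hW ->
  riesz_sequence ip (fun x : J + 'I_r => match x with inl j => hW j | inr k => e k end).
Proof.
move=> Ho Hz [a [b [a0 b0 Hab]]].
exists (Num.min a 1), (Num.max b 1); split.
- by rewrite lt_min a0 ltr01.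
- by rewrite lt_max b0.
move=> s c us.
set F := fun x : J + 'I_r => match x with inl j => hW j | inr k => e k end.
set y1 := lincomb hW (lefts s) (fun j => c (inl j)).
set y2 := \sum_(k <- rights s) c (inr k) *: e k.
have E1 : lincomb F s c = y1 + y2 by rewrite /lincomb big_split_sum.
have E2 : \sum_(i <- s) csq (c i) =
   \sum_(j <- lefts s) csq (c (inl j)) + \sum_(k <- rights s) csq (c (inr k)).
  by rewrite big_split_sum.
have orth : ip y1 y2 = 0.
  rewrite /y2 (ipsumr Hip) big1 // => k _.
  rewrite (ipZr Hip) (ipC Hip) /y1 (ip_lincomb_r Hip) big1 ?conjc0 ?mulr0 //.
  by move=> j _; rewrite Hz ?mulr0.
have Q12 : Qn ip (y1 + y2) = Qn ip y1 + Qn ip y2.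
  by rewrite (QDp Hip) orth /= mulr0 addr0.
have Q2 : Qn ip y2 = \sum_(k <- rights s) csq (c (inr k)).
  by rewrite /y2 (orthonormal_sum Hip) // uniq_rights.
have [H1 H2] := Hab (lefts s) (fun j => c (inl j)) (uniq_lefts _ _ _ us).
rewrite (hnorm2 Hip) -/y1 in H1 H2.
rewrite (hnorm2 Hip) E1 Q12 Q2 E2.
have S1 : 0 <= \sum_(j <- lefts s) csq (c (inl j)) by apply: sumr_ge0 => *; apply: csq_ge0.
have S2 : 0 <= \sum_(k <- rights s) csq (c (inr k)) by apply: sumr_ge0 => *; apply: csq_ge0.
move: S1 S2 H1 H2.
set s1 := \sum_(j <- lefts s) _; set s2 := \sum_(k <- rights s) _.
have m1 : Num.min a 1 <= a by rewrite ge_min lexx.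
have m2 : Num.min a 1 <= 1 by rewrite ge_min lexx orbT.
have m3 : b <= Num.max b 1 by rewrite le_max lexx.
have m4 : 1 <= Num.max b 1 by rewrite le_max lexx orbT.
move: m1 m2 m3 m4; set A := Num.min a 1; set B := Num.max b 1.
move=> m1 m2 m3 m4 S1 S2 H1 H2; split; nra.
Qed.


Lemma rb_frame_lower (K : choiceType) (F : K -> V) (a b : R) : 0 < a -> 0 < b ->
  (forall s c, uniq s -> a * \sum_(i <- s) csq (c i) <= Qn ip (lincomb F s c)) ->
  (forall s c, uniq s -> Qn ip (lincomb F s c) <= b * \sum_(i <- s) csq (c i)) ->
  complete_family ip F ->
  forall x eta, 0 < eta -> exists s, uniq s /\
    a / 4 * Qn ip x - eta <= \sum_(i <- s) csq (ip x (F i)).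
Proof.
move=> a0 b0 Hlow Hup Hcomp x eta eta0.
pose q := 2 * eta / (a + 2 * b).
have q0 : 0 < q by apply: divr_gt0; lra.
pose ee := Num.min q 1.
have ee0 : 0 < ee by rewrite lt_min q0 ltr01.
have ee1 : ee <= q by rewrite ge_min lexx.
have ee2 : ee <= 1 by rewrite ge_min lexx orbT.
have [s0 [c0 Hs0]] := Hcomp x ee ee0.
have [s [c [us Es]]] := spanL_lincomb _ F [seq (c0 i, i) | i <- s0].
have E0 : lincomb F s0 c0 = lincomb F s c by rewrite -Es /spanL big_map.
rewrite E0 in Hs0; set y := lincomb F s c in Hs0 *.
exists s; split => //.
have Hbes := riesz_bessel_seq Hip _ _ _ b0 Hup.
have Hl := riesz_lower_seq Hip _ F _ a0 s c us (Hlow s c us).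
rewrite -/y in Hl.
have Hyx := Hbes (y - x) s us.
have Hsum : \sum_(i <- s) csq (ip y (F i)) <=
    2 * \sum_(i <- s) csq (ip x (F i)) + 2 * \sum_(i <- s) csq (ip (y - x) (F i)).
  rewrite !mulr_sumr -big_split /=; apply: ler_sum => i _.
  have -> : ip y (F i) = ip x (F i) + ip (y - x) (F i).
    by rewrite -(ipDl Hip) addrC subrK.
  exact: csqD2.
have Qxy : Qn ip x <= 2 * Qn ip y + 2 * Qn ip (x - y).
  have := parallelogram _ _ _ Hip y (x - y).
  rewrite (addrC y (x - y)) subrK => P.
  have := Qn_ge0 Hip (y - (x - y)); lra.
have Hd : Qn ip (x - y) < ee ^+ 2 by apply/(hnorm_lt Hip).
have Hd' : Qn ip (y - x) < ee ^+ 2 by rewrite -(QN Hip) opprB.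
have ee3 : ee ^+ 2 <= q by rewrite expr2; have := ltW ee0; nra.
have Eq : (a + 2 * b) * q = 2 * eta.
  by rewrite /q mulrC divfK // lt0r_neq0 //; lra.
have Qy0 := Qn_ge0 Hip y.
have Qd0 := Qn_ge0 Hip (x - y).
move: Hsum Hyx Hl Qxy Hd Hd' ee3 Eq.
set Sx := \sum_(i <- s) csq (ip x (F i)).
set Sy := \sum_(i <- s) csq (ip y (F i)).
set Sd := \sum_(i <- s) csq (ip (y - x) (F i)).
move=> Hsum Hyx Hl Qxy Hd Hd' ee3 Eq.
have T1 : a * Qn ip (x - y) <= a * q by apply: ler_wpM2l; [apply: ltW|lra].
have T2 : b * Qn ip (y - x) <= b * q by apply: ler_wpM2l; [apply: ltW|lra].
have T3 : a / 4 * Qn ip x = a * Qn ip x / 4 by rewrite mulrAC.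
rewrite T3.
nra.
Qed.


Lemma sum_uniq_le (m : nat) (G : 'I_m -> R) (s : seq 'I_m) :
  (forall k, 0 <= G k) -> uniq s -> \sum_(k <- s) G k <= \sum_(k < m) G k.
Proof.
move=> G0 us; rewrite big_uniq // [X in _ <= X]big_mkcond /= [X in X <= _]big_mkcond /=.
by apply: ler_sum => k _; case: ifP.
Qed.

Lemma bessel_add (f : nat -> V) (m : nat) (g : 'I_m -> V) : bessel ip f ->
  exists B, 0 < B /\ forall x,
    (Defs.coef_sum ip (add_vecs f g) x <= (B * hnorm ip x ^+ 2)%:E)%E.
Proof.
case=> B [B0 HB].
have G0 : 0 <= \sum_(k < m) Qn ip (g k) by apply: sumr_ge0 => k _; apply: Qn_ge0.
exists (B + \sum_(k < m) Qn ip (g k)); split; first by lra.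
move=> x; rewrite /Defs.coef_sum; apply: esum_le_seq => s us.
rewrite big_split_sum /=.
have L : \sum_(n <- lefts s) csq (ip x (f n)) <= B * hnorm ip x ^+ 2.
  have := le_trans (esum_ge_seq (fun n => csq (ip x (f n))) _ (uniq_lefts _ _ _ us)) (HB x).
  by rewrite lee_fin.
have Rr : \sum_(k <- rights s) csq (ip x (g k)) <= Qn ip x * \sum_(k < m) Qn ip (g k).
  apply: (le_trans (y := \sum_(k <- rights s) Qn ip x * Qn ip (g k))).
    by apply: ler_sum => k _; apply: CS.
  rewrite -mulr_sumr; apply: ler_wpM2l; first exact: Qn_ge0.
  apply: sum_uniq_le; first by move=> k; apply: Qn_ge0.
  exact: uniq_rights.
move: L Rr; rewrite (hnorm2 Hip); have := Qn_ge0 Hip x; nra.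
Qed.

Lemma frame_incl (I : choiceType) (F : I -> V) (Hc : hcomplete ip) :
  frame ip F -> forall x, incl ip F x.
Proof.
case=> A [B [A0 B0 HF]] x.
have [w [Hw Ho]] := projection Hip F Hc x.
have Exw : x - w = 0.
  have [HA _] := HF (x - w).
  rewrite /Defs.coef_sum esum1 in HA; last first.
    by move=> i _; rewrite Ho [csq 0]csqE expr0n addr0.
  apply: (Qn_eq0 Hip); apply/eqP; rewrite eq_le (Qn_ge0 Hip) andbT.
  by move: HA; rewrite lee_fin (hnorm2 Hip) pmulr_rle0.
by have -> : x = w by apply: subr0_eq.
Qed.

Lemma rb_add_frame_lower (f : nat -> V) (sigma : seq nat) (m : nat) (g : 'I_m -> V) :
  riesz_basis ip (remove_add f g : {n : nat | n \notin sigma} + 'I_m -> V) ->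
  exists A, 0 < A /\ forall x,
    ((A * hnorm ip x ^+ 2)%:E <= Defs.coef_sum ip (add_vecs f g) x)%E.
Proof.
case=> Hcomp [a [b [a0 b0 Hab]]].
exists (a / 4); split; first by lra.
move=> x; apply/lee_addgt0Pr => eta eta0.
have Hlow : forall s c, uniq s -> a * \sum_(i <- s) csq (c i) <=
   Qn ip (lincomb (remove_add f g : {n : nat | n \notin sigma} + 'I_m -> V) s c).
  by move=> s c us; rewrite -(hnorm2 Hip); case: (Hab s c us).
have Hup : forall s c, uniq s ->
   Qn ip (lincomb (remove_add f g : {n : nat | n \notin sigma} + 'I_m -> V) s c)
     <= b * \sum_(i <- s) csq (c i).
  by move=> s c us; rewrite -(hnorm2 Hip); case: (Hab s c us).
have [s [us Hs]] := rb_frame_lower _ _ _ _ a0 b0 Hlow Hup Hcomp x eta eta0.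
pose phi := fun i : {n : nat | n \notin sigma} + 'I_m =>
  match i with inl n => (inl (sval n) : nat + 'I_m) | inr k => inr k end.
have phi_inj : injective phi.
  move=> [n|k] [n'|k'] //= [] E; last by rewrite E.
  by congr inl; apply: val_inj.
have ums : uniq (map phi s) by rewrite map_inj_uniq.
have := esum_ge_seq (fun i => csq (ip x (add_vecs f g i))) _ ums.
rewrite big_map.
have -> : \sum_(j <- s) csq (ip x (add_vecs f g (phi j))) =
          \sum_(i <- s) csq (ip x (remove_add f g i)).
  by apply: eq_bigr => -[n|k].
move=> He.
rewrite (hnorm2 Hip).
apply: le_trans (leeD2r _ He).
by rewrite -EFinD lee_fin; lra.
Qed.

End Comb.

Section Main.
Context {R : realType} {V : lmodType R[i]} {ip : V -> V -> R[i]}.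
Hypothesis Hip : inner_product ip.

Lemma incl_gen (I : Type) (h : I -> V) i : incl ip h (h i).
Proof. by have := incl_spanL Hip _ h [:: (1, i)]; rewrite spanL1 scale1r. Qed.

Lemma incl0 (I : Type) (h : I -> V) : incl ip h 0.
Proof. by have := incl_spanL Hip _ h [::]; rewrite spanL_nil. Qed.

Lemma incl_sum (I : Type) (h : I -> V) (T : Type) (s : seq T) (G : T -> V) :
  (forall t, incl ip h (G t)) -> incl ip h (\sum_(t <- s) G t).
Proof.
move=> H; elim: s => [|t s IH]; first by rewrite big_nil; apply: incl0.
by rewrite big_cons; apply: (incl_add Hip).
Qed.

Lemma rb_to_prs (f : nat -> V) (sigma : seq nat) (m : nat) (g : 'I_m -> V) :
  riesz_sequence ip (remove_add (sigma:=sigma) f g) ->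
  riesz_sequence ip (remove_vecs (sigma:=sigma) f).
Proof.
case=> a [b [a0 b0 Hab]]; exists a, b; split => // s c us.
pose c' := fun x : {n : nat | n \notin sigma} + 'I_m =>
  match x with inl j => c j | inr _ => 0 end.
have ums : uniq (map (@inl _ 'I_m) s).
  by rewrite map_inj_uniq // => ? ? [].
have [H1 H2] := Hab _ c' ums.
have E1 : lincomb (remove_add f g) (map inl s) c' = lincomb (remove_vecs (sigma:=sigma) f) s c.
  by rewrite /lincomb big_map.
have E2 : \sum_(i <- map inl s) csq (c' i) = \sum_(i <- s) csq (c i).
  by rewrite big_map.
by rewrite -E1 -E2.
Qed.

End Main.

Theorem mainTheorem5 (R : realType) (V : lmodType R[i]) (ip : V -> V -> R[i])
  (Hip : inner_product ip) (Hcomplete : hcomplete ip) (Hsep : hseparable ip)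
  (f : nat -> V) (Hbessel : bessel ip f) :
  pseudo_riesz_basis ip f <-> pseudo_frame ip f /\ pseudo_riesz_sequence ip f.
Proof.
split.
  case=> sigma [m [g Hrb]]; split.
    exists m, g.
    have [A [A0 HA]] := rb_add_frame_lower Hip f sigma m g Hrb.
    have [B [B0 HB]] := bessel_add Hip f m g Hbessel.
    by exists A, B; split => // x; split.
  exists sigma; case: Hrb => _ H; exact: (rb_to_prs f sigma m g H).
case=> [[m [g Hfr]] [sigma Hrs]].
pose hW := remove_vecs (sigma:=sigma) f.
have HP : forall u : V, exists w, incl ip hW w /\ forall j, ip (u - w) (hW j) = 0.
  by move=> u; apply: (projection Hip hW Hcomplete).
have [Pw HPw] := choice HP.
pose us := [seq f n | n <- sigma] ++ [seq g k | k <- enum 'I_m].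
pose ps := [seq u - Pw u | u <- us].
have Hps : forall p, p \in ps -> forall j, ip p (hW j) = 0.
  by move=> p /mapP[u _ ->] j; case: (HPw u).
have [r [e [Ho Hz Hs]]] := GS Hip _ hW ps Hps.
pose g' := fun k : 'I_r => e k.
exists sigma, r, g'.
pose Fn := (remove_add (sigma:=sigma) f g').
split; last first.
  exact: (riesz_comb Hip _ hW r e Ho Hz Hrs).
have Hus : forall u, u \in us -> incl ip Fn u.
  move=> u uU.
  have -> : u = Pw u + (u - Pw u) by rewrite addrC subrK.
  apply: (incl_add Hip).
    apply: (incl_incl Hip _ _ hW Fn); last by case: (HPw u).
    by move=> j; apply: (incl_gen Hip _ Fn (inl j)).
  have [c ->] := Hs (u - Pw u) (map_f _ uU).
  apply: (incl_sum Hip) => k; apply: (incl_scale Hip).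
  exact: (incl_gen Hip _ Fn (inr k)).
have Hgen : forall i, incl ip Fn (add_vecs f g i).
  case=> [n|k] /=.
    case Hn: (n \in sigma).
      by apply: Hus; rewrite mem_cat map_f.
    have Hn' : n \notin sigma by rewrite Hn.
    exact: (incl_gen Hip _ Fn (inl (exist _ n Hn'))).
  by apply: Hus; rewrite mem_cat map_f ?orbT // mem_enum.
move=> x eps eps0.
have Hx := incl_incl Hip _ _ (add_vecs f g) Fn x Hgen (frame_incl Hip _ _ Hcomplete Hfr x).
have [l Hl] := Hx eps eps0.
have [s [c [_ Es]]] := spanL_lincomb _ Fn l.
by exists s, c; rewrite -Es.
Qed.
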